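(* Let $\mathbb{F}$ be a field, $d\geq3$ and $V$ a vector space over $\mathbb{F}$ of dimension $d+1$. Let $E^*_0,\dots,E^*_d$ be a system of mutually orthogonal idempotents in $\mathrm{End}(V)$ and $A\in\mathrm{End}(V)$ with $E^*_iAE^*_j=0$ if $|i-j|>1$ and $E^*_iAE^*_j\neq0$ if $|i-j|=1$. Assume $A$ is multiplicity-free and bipartite with primitive idempotents $E_0,\dots,E_d$ and eigenvalues $\theta_0,\dots,\theta_d$. Let $\theta^*_0,\dots,\theta^*_d\in\mathbb{F}$ be mutually distinct and $A^*=\sum_i\theta^*_iE^*_i$. Assume $E_0$ is normalizing and that in $\Delta$ the vertex $E_0$ is adjacent to $E_1$ and no other vertex. Fix a basis $v_0,\dots,v_d$ with $v_i\in E^*_iV$, and let $b_i,c_i,\alpha_i$ be as in the context. Then for $1\le i\le d-1$, $$b_i=\frac{\theta_1(\theta^*_i-\theta^*_0)-\theta_0(\theta^*_{i-1}-\theta^*_1)}{\theta^*_{i+1}-\theta^*_{i-1}}\cdot\frac{\alpha_i}{\alpha_{i+1}},\qquad c_i=\frac{\theta_0(\theta^*_{i+1}-\theta^*_1)-\theta_1(\theta^*_i-\theta^*_0)}{\theta^*_{i+1}-\theta^*_{i-1}}\cdot\frac{\alpha_i}{\alpha_{i-1}}.$$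
   Context: A system of mutually orthogonal idempotents: $E^*_iE^*_j=\delta_{ij}E^*_i$, $\operatorname{rank}E^*_i=1$. $A$ multiplicity-free: $d+1$ distinct eigenvalues in $\mathbb{F}$; $E_i$ is the projection onto the $\theta_i$-eigenspace along the other eigenspaces. Bipartite: $\operatorname{tr}(E^*_iA)=0$ for all $i$. $\Delta$: graph on $E_0,\dots,E_d$ with $E_i\neq E_j$ adjacent iff $E_iA^*E_j\neq0$. The matrix $Y$ representing $A$ w.r.t. a basis $v_0,\dots,v_d$ satisfies $Av_j=\sum_iY_{ij}v_i$. An eigenvalue $\theta$ is normalizing if some basis $v_i\in E^*_iV$ makes every row sum of the matrix representing $A$ equal to $\theta$; $E_i$ is normalizing if $\theta_i$ is. For the fixed basis $v_i\in E^*_iV$, the matrix of $A$ is tridiagonal with zero diagonal; $b_i$ ($0\le i\le d-1$) denotes its $(i,i+1)$-entry and $c_i$ ($1\le i\le d$) its $(i,i-1)$-entry (all nonzero); set $b_d=c_0=0$. The cosine sequence $\alpha_0,\dots,\alpha_d$ for $\theta_0$ is defined by $\alpha_0=1$ and $c_i\alpha_{i-1}+b_i\alpha_{i+1}=\theta_0\alpha_i$ for $0\le i\le d-1$; equivalently $\sum_i\alpha_iv_i$ is the eigenvector of $A$ for $\theta_0$ with $\alpha_0=1$. Since $E_0$ is normalizing, all $\alpha_i$ are nonzero. *)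

(* Defs.v *)
From HB Require Import structures.
From mathcomp Require Import all_boot all_order all_algebra.
Set Implicit Arguments. Unset Strict Implicit. Unset Printing Implicit Defensive.
Import Order.TTheory GRing.Theory.
Local Open Scope ring_scope.

(* V = F^(d+1) as column vectors; End(V) = 'M[F]_(d.+1), acting by A *m v. *)
Section Defs.
Variable F : fieldType.
Variable d : nat.
Local Notation M := 'M[F]_d.+1.
Local Notation I := 'I_d.+1.

Definition orth_rank1_idempotents (Es : I -> M) : Prop :=
  (forall i j, Es i *m Es j = if i == j then Es i else 0) /\
  (forall i, \rank (Es i) = 1%N).

(* A multiplicity free with eigenvalues th_0..th_d (distinct) and E_i the
   projection onto the th_i-eigenspace along the other eigenspaces:
   E_i are nonzero mutually orthogonal idempotents summing to 1 with
   A E_i = th_i E_i. *)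
Definition mult_free_prim_idem (A : M) (th : nat -> F) (E : I -> M) : Prop :=
  (forall i j : I, i != j -> th i != th j) /\
  (forall i j, E i *m E j = if i == j then E i else 0) /\
  (\sum_i E i = 1%:M) /\
  (forall i, E i != 0) /\
  (forall i, A *m E i = th i *: E i).

Definition bipartite (Es : I -> M) (A : M) : Prop :=
  forall i, \tr (Es i *m A) = 0.

Definition basis_mx (v : I -> 'cV[F]_d.+1) : M := \matrix_(k, j) v j k 0.

Definition Es_basis (Es : I -> M) (v : I -> 'cV[F]_d.+1) : Prop :=
  (forall i, Es i *m v i = v i) /\ basis_mx v \in unitmx.

(* Y represents A w.r.t. v: A v_j = sum_i Y_ij v_i *)
Definition represents (A : M) (v : I -> 'cV[F]_d.+1) (Y : M) : Prop :=
  A *m basis_mx v = basis_mx v *m Y.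

Definition normalizing (Es : I -> M) (A : M) (theta : F) : Prop :=
  exists v : I -> 'cV[F]_d.+1, exists Y : M,
    [/\ Es_basis Es v, represents A v Y & forall i, \sum_j Y i j = theta].

(* b_i = (i,i+1)-entry (b_d = 0), c_i = (i,i-1)-entry (c_0 = 0) *)
Definition bcoef (Y : M) (i : nat) : F :=
  if (i < d)%N then Y (inord i) (inord i.+1) else 0.
Definition ccoef (Y : M) (i : nat) : F :=
  if (0 < i <= d)%N then Y (inord i) (inord i.-1) else 0.

Definition cosine_seq (Y : M) (th0 : F) (al : nat -> F) : Prop :=
  al 0%N = 1 /\
  forall i : nat, (i < d)%N ->
    ccoef Y i * al i.-1 + bcoef Y i * al i.+1 = th0 * al i.

End Defs.

(* Main.v *)
Require Import Defs.
From HB Require Import structures.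
From mathcomp Require Import all_boot all_order all_algebra.
From mathcomp Require Import ring zify.
Import Order.TTheory GRing.Theory.
Local Open Scope ring_scope.
Set Implicit Arguments.

Lemma deltaM (F : fieldType) m n p (i : 'I_m) (j : 'I_n) (M : 'M[F]_(n, p)) k l :
  (delta_mx i j *m M) k l = (k == i)%:R * M j l.
Proof.
rewrite mxE (bigD1 j) //= mxE eqxx andbT big1 ?addr0 // => j' /negPf nj.
by rewrite mxE nj andbF mul0r.
Qed.

Lemma Mdelta (F : fieldType) m n p (i : 'I_n) (j : 'I_p) (M : 'M[F]_(m, n)) k l :
  (M *m delta_mx i j) k l = M k i * (l == j)%:R.
Proof.
rewrite mxE (bigD1 i) //= mxE eqxx /= big1 ?addr0 // => j' /negPf nj.
by rewrite mxE nj mulr0.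
Qed.

Lemma deltaMdelta (F : fieldType) n (M : 'M[F]_n) i j :
  delta_mx i i *m M *m delta_mx j j = M i j *: delta_mx i j.
Proof.
apply/matrixP => k l; rewrite Mdelta deltaM !mxE.
by case: (k == i); case: (l == j); rewrite /= ?mul1r ?mulr1 ?mul0r ?mulr0.
Qed.

Lemma EsP (F : fieldType) d (Es : 'I_d.+1 -> 'M[F]_d.+1) v :
  orth_rank1_idempotents Es -> Es_basis Es v ->
  forall i, Es i *m basis_mx v = basis_mx v *m delta_mx i i.
Proof.
move=> [hE _] [hv _] i; apply/matrixP => k j.
rewrite Mdelta.
have -> : (Es i *m basis_mx v) k j = (Es i *m v j) k 0.
  by rewrite !mxE; apply: eq_bigr => l _; rewrite mxE.
case: (eqVneq j i) => [->|nji]; first by rewrite hv mulr1 mxE.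
by rewrite -(hv j) mulmxA hE eq_sym (negPf nji) mul0mx !mxE mulr0.
Qed.

Lemma Ycoord (F : fieldType) d (Es : 'I_d.+1 -> 'M[F]_d.+1) v A Y :
  orth_rank1_idempotents Es -> Es_basis Es v -> represents A v Y ->
  forall i j, Es i *m A *m Es j =
     Y i j *: (basis_mx v *m delta_mx i j *m invmx (basis_mx v)).
Proof.
move=> hE hv hr i j; have [_ uP] := hv.
have e1 : Es i *m A *m Es j *m basis_mx v =
    basis_mx v *m (delta_mx i i *m Y *m delta_mx j j).
  rewrite -mulmxA (EsP hE hv) mulmxA -(mulmxA (Es i)) hr mulmxA (EsP hE hv).
  by rewrite !mulmxA.
by rewrite -[LHS](mulmxK uP) e1 deltaMdelta -scalemxAr -scalemxAl.
Qed.
Lemma tri_row (F : fieldType) d (Y : 'M[F]_d.+1) (z : 'cV[F]_d.+1) (i : 'I_d.+1) :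
  (forall i j : 'I_d.+1, ~~ ((i.+1 == j) || (j.+1 == i)) -> Y i j = 0) ->
  (Y *m z) i 0 = ccoef Y i * z (inord i.-1) 0 + bcoef Y i * z (inord i.+1) 0.
Proof.
move=> hY; rewrite mxE.
have e : forall j : 'I_d.+1, Y i j * z j 0 =
   (if j.+1 == i then Y i j * z j 0 else 0) + (if i.+1 == j then Y i j * z j 0 else 0).
  move=> j; case: eqP => h1; case: eqP => h2 //=; rewrite ?addr0 ?add0r //.
  - lia.
  - by rewrite hY ?mul0r //; apply/negP => /orP[] /eqP; lia.
rewrite (eq_bigr _ (fun j _ => e j)) big_split /= -!big_mkcond /=.
congr (_ + _).
- rewrite /ccoef; case: (posnP i) => [i0|ip].
  + rewrite i0 /= mul0r big_pred0 // => j; apply/eqP; lia.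
  + rewrite ifT; last by have := ltn_ord i; lia.
    rewrite (big_pred1 (inord i.-1)) ?inord_val //.
    move=> j /=; rewrite -val_eqE /= inordK; last by have := ltn_ord i; lia.
    by apply/eqP/eqP; lia.
- rewrite /bcoef; case: (ltnP i d) => [id|id].
  + rewrite (big_pred1 (inord i.+1)) ?inord_val //.
    move=> j /=; rewrite -val_eqE /= inordK; last by lia.
    by apply/eqP/eqP; lia.
  + rewrite mul0r big_pred0 // => j; apply/eqP; have := ltn_ord j; lia.
Qed.
Lemma uniq_rec (F : fieldType) d (Y : 'M[F]_d.+1) th0 (al z : nat -> F) :
  al 0%N = 1 ->
  (forall i, (i < d)%N -> bcoef Y i != 0) ->
  (forall i, (i < d)%N -> ccoef Y i * al i.-1 + bcoef Y i * al i.+1 = th0 * al i) ->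
  (forall i, (i < d)%N -> ccoef Y i * z i.-1 + bcoef Y i * z i.+1 = th0 * z i) ->
  forall i, (i <= d)%N -> z i = z 0%N * al i.
Proof.
move=> al0 hb ha hz; elim/ltn_ind => -[|k] IH hk; first by rewrite al0 mulr1.
have kd : (k < d)%N by lia.
apply: (mulfI (hb k kd)).
have e1 := ha k kd; have e2 := hz k kd.
have IHk : z k = z 0%N * al k by apply: IH; lia.
have IHk' : z k.-1 = z 0%N * al k.-1 by apply: IH; lia.
have -> : bcoef Y k * z k.+1 = th0 * z k - ccoef Y k * z k.-1 by rewrite -e2; ring.
have -> : bcoef Y k * (z 0%N * al k.+1) = z 0%N * (bcoef Y k * al k.+1) by ring.
have -> : bcoef Y k * al k.+1 = th0 * al k - ccoef Y k * al k.-1 by rewrite -e1; ring.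
rewrite IHk IHk'; ring.
Qed.

Lemma tri_rec (F : fieldType) d (Y : 'M[F]_d.+1) (z : 'cV[F]_d.+1) th0 :
  (forall i j : 'I_d.+1, ~~ ((i.+1 == j) || (j.+1 == i)) -> Y i j = 0) ->
  Y *m z = th0 *: z ->
  forall i, (i < d)%N -> ccoef Y i * z (inord i.-1) 0 + bcoef Y i * z (inord i.+1) 0
      = th0 * z (inord i) 0.
Proof.
move=> hY hz i id.
have := @tri_row F d Y z (inord i) hY; rewrite hz mxE inordK; last by lia.
by move=> <-.
Qed.

Lemma PdP_neq0 (F : fieldType) n (P : 'M[F]_n.+1) i j :
  P \in unitmx -> P *m delta_mx i j *m invmx P != 0.
Proof.
move=> uP; apply/eqP => h.
have : delta_mx i j = invmx P *m (P *m delta_mx i j *m invmx P) *m P.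
  by rewrite !mulmxA mulmxKV // mulVmx // mul1mx.
rewrite h mulmx0 mul0mx => /matrixP /(_ i j); rewrite !mxE !eqxx /=.
by move/eqP; rewrite oner_eq0.
Qed.

Lemma Yzero (F : fieldType) d (Es : 'I_d.+1 -> 'M[F]_d.+1) v A Y i j :
  orth_rank1_idempotents Es -> Es_basis Es v -> represents A v Y ->
  Es i *m A *m Es j = 0 -> Y i j = 0.
Proof.
move=> hE hv hr; rewrite (Ycoord hE hv hr) => /eqP; rewrite scalemx_eq0.
by case/orP => [/eqP //|]; rewrite (negPf (@PdP_neq0 F d _ i j hv.2)).
Qed.

Lemma Ynz (F : fieldType) d (Es : 'I_d.+1 -> 'M[F]_d.+1) v A Y i j :
  orth_rank1_idempotents Es -> Es_basis Es v -> represents A v Y ->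
  Es i *m A *m Es j != 0 -> Y i j != 0.
Proof.
move=> hE hv hr; rewrite (Ycoord hE hv hr); apply: contra => /eqP ->.
by rewrite scale0r.
Qed.

Lemma Ydiag (F : fieldType) d (Es : 'I_d.+1 -> 'M[F]_d.+1) v A Y i :
  orth_rank1_idempotents Es -> Es_basis Es v -> represents A v Y ->
  bipartite Es A -> Y i i = 0.
Proof.
move=> hE hv hr hb; have := hb i.
have -> : Es i *m A = Es i *m Es i *m A by rewrite hE.1 eqxx.
rewrite -mulmxA mxtrace_mulC (Ycoord hE hv hr) mxtraceZ.
rewrite mxtrace_mulC mulmxA mulVmx ?hv.2 // mul1mx.
have -> : \tr (delta_mx i i : 'M[F]_d.+1) = 1.
  rewrite /mxtrace (bigD1 i) //= mxE !eqxx big1 ?addr0 // => k /negPf nk.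
  by rewrite mxE nk.
by rewrite mulr1.
Qed.

Lemma EA (F : fieldType) d (A : 'M[F]_d.+1) th E j :
  mult_free_prim_idem A th E -> E j *m A = th j *: E j.
Proof.
move=> [_ [hEE [hsum [_ hAE]]]].
rewrite -[E j *m A]mulmx1 -hsum mulmx_sumr (bigD1 j) //= big1 ?addr0.
  by rewrite -mulmxA hAE -scalemxAr hEE eqxx.
by move=> k nk; rewrite -mulmxA hAE -scalemxAr hEE eq_sym (negPf nk) scaler0.
Qed.

Fixpoint kf (F : fieldType) d (Y : 'M[F]_d.+1) (n : nat) : F :=
  match n with 0 => 1 | m.+1 => @kf F d Y m * bcoef Y m / ccoef Y m.+1 end.

Arguments kf {F d} Y n.

Lemma kf_nz (F : fieldType) d (Y : 'M[F]_d.+1) :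
  (forall k, (k < d)%N -> bcoef Y k != 0) ->
  (forall k, (0 < k <= d)%N -> ccoef Y k != 0) ->
  forall n, (n <= d)%N -> kf Y n != 0.
Proof.
move=> hb hc; elim => [|n IH] hn /=; first exact: oner_neq0.
rewrite mulf_neq0 ?invr_eq0 ?mulf_neq0 ?IH ?hb ?hc //; lia.
Qed.

Lemma Yadj (F : fieldType) d (Y : 'M[F]_d.+1) (a b : 'I_d.+1) :
  b = a.+1 :> nat -> Y a b = bcoef Y a /\ Y b a = ccoef Y b.
Proof.
move=> hab; rewrite /bcoef /ccoef ifT; last by have := ltn_ord b; lia.
rewrite ifT; last by have := ltn_ord b; lia.
have -> : inord a.+1 = b by apply: val_inj; rewrite /= inordK -hab.
have -> : inord b.-1 = a by apply: val_inj; rewrite /= inordK hab //; have := ltn_ord b; lia.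
by rewrite !inord_val.
Qed.

Lemma YK (F : fieldType) d (Y : 'M[F]_d.+1) :
  (forall i j : 'I_d.+1, ~~ ((i.+1 == j) || (j.+1 == i)) -> Y i j = 0) ->
  (forall k, (0 < k <= d)%N -> ccoef Y k != 0) ->
  Y^T *m diag_mx (\row_(j < d.+1) kf Y j) = diag_mx (\row_(j < d.+1) kf Y j) *m Y.
Proof.
move=> hY hc; apply/matrixP => a b; rewrite mul_mx_diag mul_diag_mx !mxE.
case: (eqVneq (b : nat) a.+1) => [e|n1].
  have [-> ->] := @Yadj F d Y _ _ e; rewrite e /=.
  have cz : ccoef Y a.+1 != 0 by apply: hc; have := ltn_ord b; lia.
  by field.
case: (eqVneq (a : nat) b.+1) => [e|n2].
  have [-> ->] := @Yadj F d Y _ _ e; rewrite e /=.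
  have cz : ccoef Y b.+1 != 0 by apply: hc; have := ltn_ord a; lia.
  by field.
case: (eqVneq a b) => [->|nab]; first by rewrite mulrC.
rewrite !hY ?mul0r ?mulr0 //; apply/negP => /orP[] /eqP; lia.
Qed.

Unset Implicit Arguments.

Theorem lemma7p6 (F : fieldType) (d : nat) (Hd : (3 <= d)%N)
  (Es : 'I_d.+1 -> 'M[F]_d.+1) (A : 'M[F]_d.+1)
  (E : 'I_d.+1 -> 'M[F]_d.+1) (th ths : nat -> F)
  (v : 'I_d.+1 -> 'cV[F]_d.+1) (Y : 'M[F]_d.+1) (al : nat -> F) :
  orth_rank1_idempotents Es ->
  (forall i j : 'I_d.+1, (i.+1 < j)%N || (j.+1 < i)%N -> Es i *m A *m Es j = 0) ->
  (forall i j : 'I_d.+1, (i.+1 == j) || (j.+1 == i) -> Es i *m A *m Es j != 0) ->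
  mult_free_prim_idem A th E ->
  bipartite Es A ->
  (forall i j : 'I_d.+1, i != j -> ths i != ths j) ->
  let As := \sum_(i < d.+1) ths i *: Es i in
  normalizing Es A (th 0%N) ->
  (* in Delta, E_0 is adjacent to E_1 and to no other vertex *)
  E ord0 *m As *m E (inord 1) != 0 ->
  (forall j : 'I_d.+1, (1 < j)%N -> E ord0 *m As *m E j = 0) ->
  Es_basis Es v ->
  represents A v Y ->
  cosine_seq Y (th 0%N) al ->
  forall i : nat, (1 <= i <= d - 1)%N ->
    bcoef Y i = (th 1%N * (ths i - ths 0%N) - th 0%N * (ths i.-1 - ths 1%N))
                 / (ths i.+1 - ths i.-1) * (al i / al i.+1)
    /\
    ccoef Y i = (th 0%N * (ths i.+1 - ths 1%N) - th 1%N * (ths i - ths 0%N))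
                 / (ths i.+1 - ths i.-1) * (al i / al i.-1).
Proof.
move=> hE hfar hnear hmf hbip hths As hnorm hD01 hD0 hv hr [al0 hcos] i hi.
have [hi0 hid] : (0 < i)%N /\ (i < d)%N by lia.
have hd0 : (0 < d)%N by lia.
have hne : (i.+1 != i.-1)%N by lia.
have him : (i.-1 <= d)%N by lia.
have [P PE] : {P | P = basis_mx v} := exist _ _ erefl.
have uP : P \in unitmx by rewrite PE; exact: hv.2.
have hrP : A *m P = P *m Y by rewrite PE; exact: hr.
have EsPP : forall k, Es k *m P = P *m delta_mx k k by rewrite PE; exact: EsP hE hv.
have hY0 : forall a b : 'I_d.+1, ~~ ((a.+1 == b) || (b.+1 == a)) -> Y a b = 0.
  move=> a b nab; case: (eqVneq a b) => [<-|ab]; first exact: Ydiag hE hv hr hbip.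
  apply: (@Yzero F d Es v A Y a b hE hv hr); apply: hfar; move: nab ab; rewrite -val_eqE /=.
  case/norP => /eqP n1 /eqP n2 /eqP n3; apply/orP; lia.
have hb : forall k, (k < d)%N -> bcoef Y k != 0.
  move=> k kd; rewrite /bcoef kd; apply: (@Ynz F d Es v A Y _ _ hE hv hr); apply: hnear.
  rewrite !inordK; lia.
have hc : forall k, (0 < k <= d)%N -> ccoef Y k != 0.
  move=> k kd; rewrite /ccoef kd; apply: (@Ynz F d Es v A Y _ _ hE hv hr); apply: hnear.
  rewrite !inordK; lia.
have YE : Y = invmx P *m A *m P by rewrite -mulmxA hrP mulKmx.
have alnz : forall k, (k <= d)%N -> al k != 0.
  case: hnorm => v' [Y' [hv' hr' hrow]].
  have [P' PE'] : {P' | P' = basis_mx v'} := exist _ _ erefl.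
  have uP' : P' \in unitmx by rewrite PE'; exact: hv'.2.
  have hrP' : A *m P' = P' *m Y' by rewrite PE'; exact: hr'.
  have EsPP' : forall k, Es k *m P' = P' *m delta_mx k k by rewrite PE'; exact: EsP hE hv'.
  have [q qE] : {q : 'cV[F]_d.+1 | q = P' *m const_mx 1} := exist _ _ erefl.
  have hq : A *m q = th 0%N *: q.
    rewrite qE mulmxA hrP' -mulmxA scalemxAr; congr (_ *m _).
    apply/matrixP => a b; rewrite !mxE -(hrow a) mulr1; apply: eq_bigr => j _.
    by rewrite !mxE mulr1.
  have [z zE] : {z | z = invmx P *m q} := exist _ _ erefl.
  have hz : Y *m z = th 0%N *: z.
    by rewrite YE zE -!mulmxA mulKVmx // hq -scalemxAr.
  have zrec := @uniq_rec F d Y (th 0%N) al _ al0 hb hcos (@tri_rec F d Y z _ hY0 hz).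
  have znz : forall k : 'I_d.+1, z k 0 != 0.
    move=> k; apply/eqP => zk.
    have h1 : Es k *m q = P *m (delta_mx k k *m z).
      by rewrite mulmxA -EsPP -mulmxA zE mulKVmx.
    have h2 : delta_mx k k *m z = 0.
      by apply/matrixP => a b; rewrite deltaM !mxE ord1 zk mulr0.
    have h3 : Es k *m q = P' *m (delta_mx k k *m const_mx 1).
      by rewrite qE mulmxA EsPP' mulmxA.
    have : delta_mx k k *m (const_mx 1 : 'cV[F]_d.+1) = 0.
      by rewrite -(mulKmx uP' (delta_mx k k *m _)) -h3 h1 h2 !mulmx0.
    move/matrixP => /(_ k 0); rewrite deltaM !mxE eqxx mulr1 => /eqP.
    by rewrite oner_eq0.
  move=> k kd; apply/eqP => ak; move: (znz (inord k)).
  by rewrite zrec // ak mulr0 eqxx.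

have EAj : forall j, E j *m A = th j *: E j := fun j => @EA F d A th E j hmf.
have hEj : forall j c, E j *m (A - c%:M) = (th j - c) *: E j.
  by move=> j c; rewrite mulmxBr EAj mul_mx_scalar scalerBl.
have key : E ord0 *m As *m ((A - (th 1%N)%:M) *m (A - (th 0%N)%:M)) = 0.
  have hsum := hmf.2.2.1.
  rewrite -[E ord0 *m As]mulmx1 -hsum mulmx_sumr mulmx_suml big1 // => j _.
  case: (ltnP 1 j) => [j1|j1]; first by rewrite hD0 // mul0mx.
  rewrite -mulmxA [E j *m _]mulmxA hEj -scalemxAl hEj scalerA.
  have [j0|j0] : (j : nat) = 0%N \/ (j : nat) = 1%N by lia.
    by rewrite j0 subrr mulr0 scale0r mulmx0.
  by rewrite j0 subrr mul0r scale0r mulmx0.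
have [D Ddef] : {D | D = diag_mx (\row_(k < d.+1) ths k)} := exist _ _ erefl.
have DP : As *m P = P *m D.
  rewrite /As Ddef diag_mx_sum_delta mulmx_suml mulmx_sumr; apply: eq_bigr => k _.
  by rewrite -scalemxAl EsPP scalemxAr mxE.
have cjM : forall M N : 'M[F]_d.+1,
    (invmx P *m M *m P) *m (invmx P *m N *m P) = invmx P *m (M *m N) *m P.
  by move=> M N; rewrite !mulmxA mulmxK.
have DE : D = invmx P *m As *m P by rewrite -mulmxA DP mulKmx.
have YcE : forall c, Y - c%:M = invmx P *m (A - c%:M) *m P.
  move=> c; rewrite mulmxBr mulmxBl -YE mul_mx_scalar -scalemxAl mulVmx //.
  by rewrite scalemx1.
have [Z ZE] : {Z | Z = invmx P *m E ord0 *m P} := exist _ _ erefl.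
have ZYD : Z *m D *m (Y - (th 1%N)%:M) *m (Y - (th 0%N)%:M) = 0.
  rewrite DE !YcE ZE !cjM !mulmxA.
  have key2 : forall X : 'M[F]_d.+1,
      E ord0 *m (As *m ((A - (th 1%N)%:M) *m ((A - (th 0%N)%:M) *m X))) = 0.
    by move=> X; rewrite !mulmxA -[E ord0 *m As *m _ *m _]mulmxA key mul0mx.
  by rewrite -!mulmxA key2 mulmx0.
have ZY : Z *m Y = th 0%N *: Z.
  by rewrite YE ZE cjM EAj -scalemxAr -scalemxAl.
have Znz : Z != 0.
  apply/eqP => Z0; move: (hmf.2.2.2.1 ord0).
  have -> : E ord0 = P *m Z *m invmx P by rewrite ZE !mulmxA mulmxV // mul1mx mulmxK.
  by rewrite Z0 mulmx0 mul0mx eqxx.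
have [r [c Zrc]] : exists r c, Z r c != 0.
  case: (pickP (fun rc : 'I_d.+1 * 'I_d.+1 => Z rc.1 rc.2 != 0)) => [[r c] /= h|h].
    by exists r, c.
  case/eqP: Znz; apply/matrixP => a b; move: (h (a, b)) => /= /negbFE /eqP ->.
  by rewrite mxE.

have [x xE] : {x : 'cV[F]_d.+1 | x = (row r Z)^T} := exist _ _ erefl.
have trYc : forall cc, (Y - cc%:M)^T = Y^T - cc%:M by move=> cc; rewrite linearB /= tr_scalar_mx.
have hx1 : Y^T *m x = th 0%N *: x.
  by rewrite xE -trmx_mul -row_mul ZY linearZ /= linearZ.
have hx2 : (Y^T - (th 0%N)%:M) *m ((Y^T - (th 1%N)%:M) *m (D *m x)) = 0.
  have := congr1 (fun M => (row r M)^T) ZYD; rewrite /= !row_mul !trmx_mul.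
  have trD : D^T = D by rewrite Ddef tr_diag_mx.
  by rewrite !trYc trD -xE linear0 /= trmx0 => ->.
have xnz : x c 0 != 0 by rewrite xE !mxE.
set K := diag_mx (\row_(j < d.+1) kf Y j).
have uK : K \in unitmx.
  rewrite unitmxE det_diag unitfE; apply/prodf_neq0 => j _; rewrite mxE.
  by apply: kf_nz => //; have := ltn_ord j; lia.
have YKE := @YK F d Y hY0 hc; rewrite -/K in YKE.
have [y yE] : {y | y = invmx K *m x} := exist _ _ erefl.
have hy : Y *m y = th 0%N *: y.
  have -> : Y = invmx K *m Y^T *m K by rewrite -mulmxA YKE mulKmx.
  by rewrite yE -!mulmxA mulKVmx // hx1 -scalemxAr.
have yrec := @uniq_rec F d Y (th 0%N) al _ al0 hb hcos (@tri_rec F d Y y _ hY0 hy).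
set alv := \col_(j < d.+1) al j.
have yA : y = y (inord 0) 0 *: alv.
  apply/matrixP => a b; rewrite ord1 !mxE -yrec; last by have := ltn_ord a; lia.
  by rewrite inord_val.
have y0nz : y (inord 0) 0 != 0.
  apply/eqP => y0; move: xnz; rewrite -(mulKVmx uK x) -yE yA y0 scale0r mulmx0.
  by rewrite mxE eqxx.
have hw : (Y - (th 0%N)%:M) *m ((Y - (th 1%N)%:M) *m (D *m alv)) = 0.
  have Kc : forall cc, (Y^T - cc%:M) *m K = K *m (Y - cc%:M).
    by move=> cc; rewrite mulmxBl mulmxBr YKE scalar_mxC.
  have DK : D *m K = K *m D by rewrite Ddef; apply: diag_mxC.
  move: hx2; rewrite -(mulKVmx uK x) -yE [D *m (K *m y)]mulmxA DK -mulmxA.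
  rewrite [(Y^T - _) *m (K *m _)]mulmxA Kc -mulmxA [(Y^T - _) *m (K *m _)]mulmxA Kc.
  rewrite -mulmxA => /(congr1 (mulmx (invmx K))); rewrite mulKmx // mulmx0.
  rewrite yA -!scalemxAr => /eqP; rewrite scalemx_eq0 (negPf y0nz) /= => /eqP.
  done.

have [h hEq] : {h | h = (Y - (th 1%N)%:M) *m (D *m alv)} := exist _ _ erefl.
have hh : Y *m h = th 0%N *: h.
  apply/eqP; rewrite -subr_eq0 -mul_scalar_mx -mulmxBl hEq hw //.
have hrec := @uniq_rec F d Y (th 0%N) al _ al0 hb hcos (@tri_rec F d Y h _ hY0 hh).
have wE : forall j, (j <= d)%N -> (D *m alv) (inord j) 0 = ths j * al j.
  by move=> j jd; rewrite Ddef mul_diag_mx !mxE inordK.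
have hfE : forall k, (k < d)%N -> h (inord k) 0 =
    ccoef Y k * (ths k.-1 * al k.-1) + bcoef Y k * (ths k.+1 * al k.+1)
    - th 1%N * (ths k * al k).
  move=> k kd; rewrite hEq mulmxBl mul_scalar_mx.
  have -> : forall (M N : 'cV[F]_d.+1) a, (M - a *: N) (inord k) 0 = M (inord k) 0 - a * N (inord k) 0.
    by move=> M N a; rewrite !mxE.
  have kd' : (k <= d)%N := ltnW kd.
  have kdm : (k.-1 <= d)%N := leq_trans (leq_pred k) kd'.
  rewrite (@tri_row F d Y _ (inord k) hY0) inordK //.
  by rewrite !wE.
have ths_nz : ths i.+1 - ths i.-1 != 0.
  rewrite subr_eq0; have := hths (inord i.+1) (inord i.-1).
  have him' : (i.-1 < d.+1)%N := him.
  rewrite !inordK //; apply; rewrite -val_eqE /= !inordK //.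
have a1 : al i.+1 != 0 by apply: alnz.
have am1 : al i.-1 != 0 by apply: alnz.
have E1 : ccoef Y i * al i.-1 + bcoef Y i * al i.+1 = th 0%N * al i.
  by apply: hcos.
have c0 : ccoef Y 0 = 0 by rewrite /ccoef.
have E3 : bcoef Y 0 * al 1%N = th 0%N.
  by have := hcos 0%N hd0; rewrite c0 al0 mul0r add0r mulr1.
have E2 : ccoef Y i * (ths i.-1 * al i.-1) + bcoef Y i * (ths i.+1 * al i.+1)
    - th 1%N * (ths i * al i) = (bcoef Y 0 * (ths 1%N * al 1%N) - th 1%N * ths 0%N) * al i.
  have := hrec i (ltnW hid); rewrite (hfE i hid) (hfE 0%N hd0).
  by rewrite c0 al0 => ->; ring.
have eB : bcoef Y i * al i.+1 * (ths i.+1 - ths i.-1) =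
   (th 1%N * (ths i - ths 0%N) - th 0%N * (ths i.-1 - ths 1%N)) * al i.
  apply/eqP; rewrite -subr_eq0; apply/eqP.
  transitivity ((ccoef Y i * (ths i.-1 * al i.-1) + bcoef Y i * (ths i.+1 * al i.+1)
    - th 1%N * (ths i * al i) - (bcoef Y 0 * (ths 1%N * al 1%N) - th 1%N * ths 0%N) * al i)
    - ths i.-1 * (ccoef Y i * al i.-1 + bcoef Y i * al i.+1 - th 0%N * al i)
    + ths 1%N * al i * (bcoef Y 0 * al 1%N - th 0%N)); first by ring.
  by rewrite E1 E2 E3 !subrr; ring.
split.
  have -> : bcoef Y i = bcoef Y i * al i.+1 * (ths i.+1 - ths i.-1)
      / (ths i.+1 - ths i.-1) / al i.+1 by field; apply/andP.
  by rewrite eB; field; apply/andP.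
have eC : ccoef Y i * al i.-1 = th 0%N * al i - bcoef Y i * al i.+1 by rewrite -E1; ring.
have -> : ccoef Y i = ccoef Y i * al i.-1 * (ths i.+1 - ths i.-1)
    / (ths i.+1 - ths i.-1) / al i.-1 by field; apply/andP.
by rewrite eC mulrBl eB; field; apply/andP.
Qed.
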